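(* For given positive integers $N_s$ ($s\in\mathcal S$) and $N=\sum_s N_s$, let $M_s=\lfloor N/N_s\rfloor$ and $r_s=N\bmod N_s$. Consider an sAEDS with $|\mathcal X_s|=N_s$ in which, for each $s$, exactly $N_s-r_s$ states $x\in\mathcal X_s$ have $|\mathcal F^+_x|=M_s$ and the other $r_s$ have $|\mathcal F^+_x|=M_s+1$, and, for a stationary distribution $Q$ of its state chain, each $\mathcal F^+_x$ is encoded by a phased-in code (with $|\mathcal F^+_x|$ codewords) matched to $Q$ restricted to $\mathcal F^+_x$. Then $$L\le H(p)+D(p\|q)+\sigma+\sum_{s\in\mathcal S}p(s)\lg\frac{M_s+\tilde Q_{M_s+1}}{N/N_s},$$ where $\sigma=\lg\lg e+1-\lg e$ and $\tilde Q_{M_s+1}=\sum_{x\in\mathcal X_s,\ |\mathcal F^+_x|=M_s+1}\tilde Q_s(x)$.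
   Context: Let $\mathcal S$ be a finite alphabet with $|\mathcal S|\ge 2$ and $p=\{p(s)\}$ a probability distribution with $p(s)>0$ for all $s$ (i.i.d. source). $\mathcal B=\{0,1\}^*$ (including the empty word), $l(\beta)$ the word length, $\lg=\log_2$. An AEDS with finite state set $\mathcal X$, $|\mathcal X|=N$, consists of maps $E_{\hat x}:\mathcal S\to\mathcal B$ and $F^-_{\hat x}:\mathcal S\to\mathcal X$ ($\hat x\in\mathcal X$) such that for every $x\in\mathcal X$ the words $E_{\hat x}(s)$ over all pairs $(\hat x,s)$ with $F^-_{\hat x}(s)=x$ are pairwise distinct and form a prefix-free set. The state chain is the Markov chain on $\mathcal X$ moving from $\hat x$ to $F^-_{\hat x}(s)$ with probability $p(s)$; for a stationary distribution $Q$ the average code length is $L=\sum_{\hat x}\sum_s p(s)Q(\hat x)l(E_{\hat x}(s))$. A state-divided AEDS (sAEDS) is an AEDS for which the sets $\mathcal X_s=\{F^-_{\hat x}(s):\hat x\in\mathcal X\}$ are pairwise disjoint with union $\mathcal X$; $N_s=|\mathcal X_s|$, $q(s)=N_s/N$. For $x\in\mathcal X_s$, $\mathcal F^+_x=\{\hat x: F^-_{\hat x}(s)=x\}$; for each $s$ these sets partition $\mathcal X$. An sAEDS is thus specified by the partitions and, for each $x\in\mathcal X_s$, an injective prefix-free code $\hat x\mapsto E_{\hat x}(s)$ on $\mathcal F^+_x$; the state chain (hence $Q$) depends only on $p$ and the partitions. For $x\in\mathcal X_s$, $\tilde Q_s(x)=\sum_{\hat x\in\mathcal F^+_x}Q(\hat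 x)$. Phased-in code: for an integer $M\ge1$ and $k=\lceil\lg M\rceil$, a prefix-free code on an $M$-element set with $2^k-M$ codewords of length $k-1$ and $2M-2^k$ codewords of length $k$ (for $M=1$, the single empty word). It is matched to a distribution on that set if the length-$(k-1)$ codewords go to $2^k-M$ elements of largest probability. $H(p)=-\sum_s p(s)\lg p(s)$, $D(p\|q)=\sum_s p(s)\lg(p(s)/q(s))$. *)

(* Defs.v *)
From HB Require Import structures.
From mathcomp Require Import all_boot all_order all_algebra.
From mathcomp Require Import all_classical all_reals.
From mathcomp Require Import all_analysis.
Set Implicit Arguments. Unset Strict Implicit. Unset Printing Implicit Defensive.
Import Order.TTheory GRing.Theory Num.Theory.
Local Open Scope ring_scope.

Section AEDS.
Variables (R : realType) (S X : finType).

Definition lg (x : R) : R := ln x / ln 2.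

Definition entropy (p : S -> R) : R := - \sum_s p s * lg (p s).
Definition kldiv (p q : S -> R) : R := \sum_s p s * lg (p s / q s).
Definition sigma : R := lg (lg (expR 1)) + 1 - lg (expR 1).

(* AEDS condition: for every state x, the words E_xh(s) over all pairs
   (xh, s) with F^-_xh(s) = x are pairwise distinct and prefix-free. *)
Definition is_AEDS (E : X -> S -> seq bool) (F : X -> S -> X) : Prop :=
  forall x (a b : X * S), F a.1 a.2 = x -> F b.1 b.2 = x -> a != b ->
    E a.1 a.2 != E b.1 b.2 /\ ~~ prefix (E a.1 a.2) (E b.1 b.2).

Definition Xs (F : X -> S -> X) (s : S) : {set X} := [set F xh s | xh in X].

Definition Fplus (F : X -> S -> X) (s : S) (x : X) : {set X} :=
  [set xh | F xh s == x].

Definition is_sAEDS (E : X -> S -> seq bool) (F : X -> S -> X) : Prop :=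
  [/\ is_AEDS E F,
      (forall s t, s != t -> [disjoint Xs F s & Xs F t]) &
      \bigcup_(s : S) Xs F s = [set: X]].

(* stationary distribution of the state chain (xh -> F xh s w.p. p s) *)
Definition stationary (p : S -> R) (F : X -> S -> X) (Q : X -> R) : Prop :=
  [/\ forall x, 0 <= Q x,
      \sum_x Q x = 1 &
      forall x, Q x = \sum_(xh : X) \sum_(s : S | F xh s == x) p s * Q xh].

Definition avg_len (p : S -> R) (E : X -> S -> seq bool) (Q : X -> R) : R :=
  \sum_(xh : X) \sum_(s : S) p s * Q xh * (size (E xh s))%:R.

(* c restricted to A is a phased-in code: injective, prefix-free, with
   k = ceil(lg |A|), all lengths in {k-1, k}, exactly 2|A| - 2^k codewords
   of length k (hence 2^k - |A| of length k-1); for |A| = 1 this forces the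
   single empty word. *)
Definition phased_in_matched (Q : X -> R) (A : {set X}) (c : X -> seq bool)
  : Prop :=
  let M := #|A| in let k := up_log 2 M in
  [/\ forall y y', y \in A -> y' \in A -> y != y' ->
        c y != c y' /\ ~~ prefix (c y) (c y'),
      forall y, y \in A -> size (c y) = k \/ (size (c y)).+1 = k,
      #|[set y in A | size (c y) == k]| = (2 * M - 2 ^ k)%N &
      forall y y', y \in A -> y' \in A ->
        (size (c y)).+1 = k -> size (c y') = k -> Q y' <= Q y].

Definition Qtilde (F : X -> S -> X) (Q : X -> R) (s : S) (x : X) : R :=
  \sum_(xh in Fplus F s x) Q xh.

End AEDS.

(* Main.v *)
Require Import Defs.
From HB Require Import structures.
From mathcomp Require Import all_boot all_order all_algebra.
From mathcomp Require Import all_classical all_reals.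
From mathcomp Require Import all_analysis.
From mathcomp Require Import ring lra.
Set Implicit Arguments. Unset Strict Implicit.
Import Order.TTheory GRing.Theory Num.Theory.
Local Open Scope ring_scope.

Lemma up_log_dbl (M : nat) : (0 < M)%N -> (2 ^ up_log 2 M <= 2 * M)%N.
Proof.
move=> M0; case: (ltnP 1 M) => HM.
  have h := up_log_gtn (isT : (1 < 2)%N) HM.
  have k0 : (0 < up_log 2 M)%N by rewrite up_log_gt0 HM.
  by rewrite -(prednK k0) expnS leq_mul2l /= ltnW.
have -> : M = 1%N by apply/eqP; rewrite eqn_leq HM M0.
by rewrite up_log1.
Qed.

Section Aux.
Variable R : realType.

Lemma ln_le_sub1 (y : R) : 0 < y -> ln y <= y - 1.
Proof. move=> y0; have := @le_ln1Dx R (y - 1).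
have -> : 1 + (y - 1) = y by ring. apply; lra. Qed.

Lemma ln2_gt0 : 0 < ln (2 : R).
Proof. by apply: ln_gt0; lra. Qed.

Lemma lgM (x y : R) : 0 < x -> 0 < y -> lg (x * y) = lg x + lg y.
Proof. by move=> x0 y0; rewrite /lg lnM ?posrE // mulrDl. Qed.

Lemma key_bound (M : R) (k : nat) : 0 < M ->
  k%:R + 1 - 2 ^+ k / M <= lg M + sigma R.
Proof.
move=> M0; have c0 := ln2_gt0.
set c := ln (2:R) in c0 *.
have p0 : 0 < (2:R) ^+ k by apply: exprn_gt0; lra.
have t0 : 0 < 2 ^+ k / M * c by apply: mulr_gt0 => //; apply: divr_gt0.
have := ln_le_sub1 t0.
rewrite lnM ?posrE //; last by apply: divr_gt0.
rewrite ln_div ?posrE // lnXn; last lra.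
rewrite /sigma /lg expRK -/c.
have -> : ln (1 / c) = - ln c by rewrite div1r lnV ?posrE.
move=> h.
have ic0 : 0 < c^-1 by rewrite invr_gt0.
have h' := ler_wpM2r (ltW ic0) h.
have e1 : c *+ k * c^-1 = k%:R by rewrite mulrnAl mulfV //; lra.
have e2 : 2 ^+ k / M * c * c^-1 = 2 ^+ k / M by rewrite -mulrA mulfV ?mulr1 //; lra.
move: h'; rewrite !mulrDl e1 e2 !mulNr.
lra.
Qed.
End Aux.
Section Aux2.
Variables (R : realType) (X : finType).

Lemma phased_bound (Q : X -> R) (A : {set X}) (c : X -> seq bool) :
  (forall x, 0 <= Q x) -> (0 < #|A|)%N -> phased_in_matched Q A c ->
  \sum_(y in A) Q y * (size (c y))%:R <=
  (\sum_(y in A) Q y) * (lg #|A|%:R + sigma R).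
Proof.
move=> Q0 A0 [_ Hlen Hcard Hmatch].
set M := #|A| in A0 Hcard *. set k := up_log 2 M in Hlen Hcard Hmatch *.
set B := [set y | size (c y) == k].
have eLo : [set y in A | size (c y) == k] = A :&: B by apply/setP => y; rewrite !inE.
rewrite eLo in Hcard.
have hID := cardsID B A. rewrite -/M Hcard in hID.
set m := #|A :\: B| in hID *.
have hdbl := up_log_dbl A0. rewrite -/M -/k in hdbl.
have rM : (M%:R : R) = m%:R + (2 * M - 2 ^ k)%N%:R by rewrite -natrD addnC hID.
rewrite natrB // natrM natrX in rM.
set n := (2 * M - 2 ^ k)%N in Hcard hID.
rewrite (big_setID B) /= [X in _ <= X * _](big_setID B) /=.
set b := \sum_(i in A :&: B) Q i. set a := \sum_(i in A :\: B) Q i.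
have -> : \sum_(i in A :&: B) Q i * (size (c i))%:R = b * k%:R.
  rewrite /b mulr_suml; apply: eq_bigr => y; rewrite !inE => /andP[_ /eqP ->] //.
have -> : \sum_(i in A :\: B) Q i * (size (c i))%:R = a * (k%:R - 1).
  rewrite /a mulr_suml; apply: eq_bigr => y; rewrite !inE => /andP[hy yA].
  case: (Hlen y yA) => hs; first by rewrite hs eqxx in hy.
  by rewrite -hs mulrSr addrK.
have a0 : 0 <= a by apply: sumr_ge0.
have b0 : 0 <= b by apply: sumr_ge0.
have pair : b * m%:R <= a * n%:R.
  rewrite !mulr_natr.
  have : \sum_(y in A :\: B) \sum_(y' in A :&: B) Q y' <=
         \sum_(y in A :\: B) \sum_(y' in A :&: B) Q y.
    apply: ler_sum => y; rewrite !inE => /andP[hy yA].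
    apply: ler_sum => y'; rewrite !inE => /andP[yA' /eqP hy'].
    apply: Hmatch => //.
    by case: (Hlen y yA) => hs //; rewrite hs eqxx in hy.
  rewrite sumr_const -/b -/m.
  rewrite (eq_bigr (fun y => Q y *+ n)); last by move=> y _; rewrite sumr_const Hcard.
  by rewrite sumrMnl.
have M0 : (0 : R) < M%:R by rewrite ltr0n.
have kb := key_bound k M0.
have hab : 0 <= b + a by rewrite addr_ge0.
apply: le_trans (ler_wpM2l hab kb).
have e : 2 ^+ k / M%:R = (m%:R + M%:R) / (M%:R : R).
  by congr (_ / _); lra.
rewrite e.
have hMn : (M%:R : R) = m%:R + n%:R by rewrite -natrD addnC hID.
set mm := (m%:R : R) in hMn pair e *. set nn := (n%:R : R) in hMn pair e *.
set MM := (M%:R : R) in hMn M0 e kb *.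
set t := mm / MM.
have -> : (mm + MM) / MM = t + 1 by rewrite /t mulrDl mulfV // gt_eqF.
have H : (b + a) * t <= a.
  rewrite /t mulrA ler_pdivrMr // -subr_ge0.
  have -> : a * MM - (b + a) * mm = a * nn - b * mm by rewrite hMn; ring.
  by rewrite subr_ge0.
rewrite -subr_ge0.
have -> : (b + a) * (k%:R + 1 - (t + 1)) - (b * k%:R + a * (k%:R - 1)) = a - (b + a) * t by ring.
by rewrite subr_ge0.
Qed.

Lemma two_point (M a b : R) : 1 <= M -> 0 <= a -> 0 <= b -> a + b = 1 ->
  b * lg M + a * lg (M + 1) <= lg (M + a).
Proof.
move=> M1 a0 b0 ab.
have c0 := @ln2_gt0 R.
have Ma : 0 < M + a by lra.
have M0 : 0 < M by lra.
have M10 : 0 < M + 1 by lra.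
set d := (M + a)^-1.
have d0 : 0 < d by rewrite invr_gt0.
have h1 : ln M - ln (M + a) <= - a * d.
  rewrite -ln_div ?posrE //; apply: le_trans (ln_le_sub1 (divr_gt0 M0 Ma)) _.
  rewrite le_eqVlt; apply/orP; left; apply/eqP.
  by rewrite /d; field; rewrite gt_eqF.
have h2 : ln (M + 1) - ln (M + a) <= b * d.
  rewrite -ln_div ?posrE //; apply: le_trans (ln_le_sub1 (divr_gt0 M10 Ma)) _.
  rewrite le_eqVlt; apply/orP; left; apply/eqP.
  have -> : b = 1 - a by lra.
  by rewrite /d; field; rewrite gt_eqF.
have h1' := ler_wpM2l b0 h1. have h2' := ler_wpM2l a0 h2.
have hs : b * ln M + a * ln (M + 1) <= ln (M + a).
  rewrite -subr_ge0.
  have -> : ln (M + a) - (b * ln M + a * ln (M + 1)) =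
     - (b * (ln M - ln (M + a)) + a * (ln (M + 1) - ln (M + a))) + (1 - (a + b)) * ln (M + a) by ring.
  rewrite ab subrr mul0r addr0 oppr_ge0.
  apply: le_trans (lerD h1' h2') _.
  by rewrite le_eqVlt; apply/orP; left; apply/eqP; ring.
rewrite /lg !mulrA -mulrDl.
apply: ler_wpM2r => //; by rewrite invr_ge0 ltW.
Qed.
End Aux2.

Section Aux3.
Variables (R : realType) (S X : finType).

Lemma partQ (F : X -> S -> X) (s : S) (G : X -> R) :
  \sum_xh G xh = \sum_(x in Xs F s) \sum_(xh in Fplus F s x) G xh.
Proof.
rewrite (partition_big (fun xh => F xh s) (fun x => x \in Xs F s)) /=; last by move=> xh _; apply/imsetP; exists xh.
apply: eq_bigr => x _; apply: eq_bigl => xh; by rewrite !inE.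
Qed.

Lemma per_s (Q : X -> R) (E : X -> S -> seq bool) (F : X -> S -> X) (s : S) (Mn : nat) :
  (forall x, 0 <= Q x) -> \sum_x Q x = 1 -> (0 < Mn)%N ->
  (forall x, x \in Xs F s -> #|Fplus F s x| = Mn \/ #|Fplus F s x| = Mn.+1) ->
  (forall x, x \in Xs F s -> phased_in_matched Q (Fplus F s x) (fun y => E y s)) ->
  \sum_xh Q xh * (size (E xh s))%:R <=
    sigma R + lg (Mn%:R + \sum_(x in Xs F s | #|Fplus F s x| == Mn.+1) Qtilde F Q s x).
Proof.
move=> Q0 Q1 Mn0 Hcl Hph.
have Qt1 : \sum_(x in Xs F s) Qtilde F Q s x = 1 by rewrite -Q1 (partQ F s).
rewrite (partQ F s).
apply: (@le_trans _ _ (\sum_(x in Xs F s) Qtilde F Q s x * (lg #|Fplus F s x|%:R + sigma R))).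
  apply: ler_sum => x xX; apply: phased_bound => //; last exact: Hph.
  move: xX => /imsetP[xh _ ->]; apply/card_gt0P; exists xh; by rewrite inE.
under eq_bigr do rewrite mulrDr.
rewrite big_split /= -mulr_suml Qt1 mul1r [X in X <= _]addrC lerD2l.
rewrite (bigID (fun x => #|Fplus F s x| == Mn.+1)) /=.
set a := \sum_(x in Xs F s | #|Fplus F s x| == Mn.+1) Qtilde F Q s x.
set b := \sum_(x in Xs F s | #|Fplus F s x| != Mn.+1) Qtilde F Q s x.
have Qt0 : forall x, 0 <= Qtilde F Q s x by move=> x; apply: sumr_ge0.
have -> : \sum_(x in Xs F s | #|Fplus F s x| == Mn.+1) Qtilde F Q s x * lg #|Fplus F s x|%:R
   = a * lg (Mn.+1%:R).
  rewrite /a mulr_suml; apply: eq_bigr => x /andP[_ /eqP ->] //.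
have -> : \sum_(x in Xs F s | #|Fplus F s x| != Mn.+1) Qtilde F Q s x * lg #|Fplus F s x|%:R
   = b * lg (Mn%:R).
  rewrite /b mulr_suml; apply: eq_bigr => x /andP[xX hx].
  by case: (Hcl x xX) => e; [rewrite e | rewrite e eqxx in hx].
rewrite addrC -natr1.
apply: two_point.
- by rewrite ler1n.
- by apply: sumr_ge0.
- by apply: sumr_ge0.
- by rewrite /a /b -Qt1 [in RHS](bigID (fun x => #|Fplus F s x| == Mn.+1)).
Qed.
End Aux3.

Unset Implicit Arguments. Set Strict Implicit.

Theorem theorem5 (R : realType) (S X : finType) (p : S -> R) (Ns : S -> nat)
    (E : X -> S -> seq bool) (F : X -> S -> X) (Q : X -> R) :
  (1 < #|S|)%N ->
  (forall s, 0 < p s) -> \sum_s p s = 1 ->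
  (forall s, 0 < Ns s)%N ->
  #|X| = (\sum_s Ns s)%N ->
  is_sAEDS E F ->
  (forall s, #|Xs F s| = Ns s) ->
  (forall s,
     #|[set x in Xs F s | #|Fplus F s x| == ((\sum_t Ns t) %/ Ns s)%N]|
       = (Ns s - (\sum_t Ns t) %% Ns s)%N /\
     #|[set x in Xs F s | #|Fplus F s x| == ((\sum_t Ns t) %/ Ns s).+1]|
       = ((\sum_t Ns t) %% Ns s)%N) ->
  stationary p F Q ->
  (forall s x, x \in Xs F s ->
     phased_in_matched Q (Fplus F s x) (fun y => E y s)) ->
  avg_len p E Q <=
    entropy p
    + kldiv p (fun s => (Ns s)%:R / (\sum_t Ns t)%N%:R)
    + sigma R
    + \sum_s p s * lg ((((\sum_t Ns t) %/ Ns s)%N%:R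
          + \sum_(x in Xs F s | #|Fplus F s x| == ((\sum_t Ns t) %/ Ns s).+1)
              Qtilde F Q s x)
          / ((\sum_t Ns t)%N%:R / (Ns s)%:R)).
Proof.
move=> _ p0 p1 Ns0 _ _ HNs Hcard [Q0 Q1 _] Hph.
set N := (\sum_t Ns t)%N in Hcard *.
have NsN : forall s, (Ns s <= N)%N by move=> s; rewrite /N (bigD1 s) //= leq_addr.
have N0 : (0 < N)%N.
  case: (pickP S) => [s _|S0]; first exact: leq_trans (Ns0 s) (NsN s).
  by have := p1; rewrite big_pred0 // => /eqP; rewrite eq_sym oner_eq0.
have cls : forall s x, x \in Xs F s ->
    #|Fplus F s x| = (N %/ Ns s)%N \/ #|Fplus F s x| = (N %/ Ns s).+1.
  move=> s x xX; case: (Hcard s) => h0 h1.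
  set A0 := [set x in Xs F s | #|Fplus F s x| == (N %/ Ns s)%N] in h0.
  set A1 := [set x in Xs F s | #|Fplus F s x| == (N %/ Ns s).+1] in h1.
  case e: (#|Fplus F s x| == (N %/ Ns s).+1); first by right; apply/eqP.
  left.
  have sub : A0 \subset Xs F s :\: A1.
    apply/fintype.subsetP => y; rewrite !inE => /andP[yX /eqP ->].
    by rewrite yX eqn_leq ltnn andbF.
  have s1 : A1 \subset Xs F s by apply/fintype.subsetP => y; rewrite inE => /andP[].
  have cd : #|A0| = #|Xs F s :\: A1|.
    by rewrite cardsD (finset.setIidPr s1) h0 h1 HNs.
  have := subset_cardP cd sub => /(_ x).
  by rewrite !inE e xX /= => /eqP.
apply: (@le_trans _ _ (\sum_s p s * (sigma R + lg ((N %/ Ns s)%N%:R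
   + \sum_(x in Xs F s | #|Fplus F s x| == (N %/ Ns s).+1) Qtilde F Q s x)))).
  rewrite /avg_len exchange_big /=; apply: ler_sum => s _.
  rewrite (eq_bigr (fun xh => p s * (Q xh * (size (E xh s))%:R))); last by move=> xh _; rewrite mulrA.
  rewrite -mulr_sumr; apply: ler_wpM2l; first exact: ltW.
  apply: per_s => //; first by rewrite divn_gt0.
  - exact: cls.
  - exact: Hph.
under eq_bigr do rewrite mulrDr.
rewrite big_split /= -mulr_suml p1 mul1r /entropy /kldiv.
set Ma := fun s => ((N %/ Ns s)%N%:R
   + \sum_(x in Xs F s | #|Fplus F s x| == (N %/ Ns s).+1) Qtilde F Q s x) : R.
have Ma0 : forall s, 0 < Ma s.
  move=> s; rewrite /Ma; apply: ltr_pwDl.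
    by rewrite ltr0n divn_gt0.
  by apply: sumr_ge0 => x _; apply: sumr_ge0.
have Nr0 : (0 : R) < N%:R by rewrite ltr0n.
have key : \sum_s p s * lg (p s / ((Ns s)%:R / N%:R)) + \sum_s p s * lg (Ma s / (N%:R / (Ns s)%:R))
   = \sum_s p s * lg (p s) + \sum_s p s * lg (Ma s).
  rewrite -!big_split; apply: eq_bigr => s _ /=.
  have ns0 : (0 : R) < (Ns s)%:R by rewrite ltr0n.
  rewrite -!mulrDr; congr (_ * _).
  rewrite -lgM; last by apply: divr_gt0 => //; apply: divr_gt0.
    rewrite -lgM //; congr lg; field.
    by apply/andP; split; rewrite gt_eqF.
  by apply: divr_gt0 => //; apply: divr_gt0.
rewrite -/Ma.
move: key.
set A := \sum_s p s * lg (p s / ((Ns s)%:R / N%:R)).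
set B := \sum_s p s * lg (Ma s / (N%:R / (Ns s)%:R)).
set C := \sum_s p s * lg (p s).
set D := \sum_s p s * lg (Ma s).
move=> key; lra.
Qed.
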